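(* Every $W$-space is strongly $C$-selective.
   Context: All spaces are assumed $T_1$. For spaces $Y$ and $X$, a map $\varphi: Y\to\mathcal P(X)\setminus\{\emptyset\}$ is lower semicontinuous (l.s.c.) if for every open $U\subseteq X$ the set $\varphi^{-1}(U)=\{y\in Y:\varphi(y)\cap U\neq\emptyset\}$ is open in $Y$. A selection of $\varphi$ is a map $f:Y\to X$ with $f(y)\in\varphi(y)$ for all $y$. $X$ is strongly $Y$-selective if every l.s.c. map $Y\to\mathcal P(X)\setminus\{\emptyset\}$ has a continuous selection, and $X$ is strongly $C$-selective if it is strongly $Y$-selective for every countable regular space $Y$. For $x\in X$ consider the game in which, at stage $n$, player I chooses an open set $U_n\ni x$ and player II chooses a point $x_n\in U_n$; player I wins if the sequence $(x_n)$ converges to $x$. $X$ is a $W$-space if player I has a winning strategy in this game at every point $x\in X$. *)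

(* Defs.v *)
From HB Require Import structures.
From mathcomp Require Import all_boot all_order.
From mathcomp Require Import all_classical all_reals all_analysis.
Set Implicit Arguments. Unset Strict Implicit. Unset Printing Implicit Defensive.
Local Open Scope classical_set_scope.

Definition lsc_map (Y X : topologicalType) (phi : Y -> set X) : Prop :=
  (forall y, phi y !=set0) /\
  (forall U : set X, open U -> open [set y | phi y `&` U !=set0]).

Definition strongly_selective (Y X : topologicalType) : Prop :=
  forall phi : Y -> set X, lsc_map phi ->
    exists f : Y -> X, continuous f /\ (forall y, phi y (f y)).

Definition strongly_C_selective (X : topologicalType) : Prop :=
  forall Y : topologicalType,
    @accessible_space Y -> @regular_space Y ->
    countable [set: Y] -> strongly_selective Y X.

(* A strategy for player I at x: given the finite history of II's moves
   [x_0; ...; x_{n-1}], I plays an open set containing x. *)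
Definition strategyI (X : topologicalType) (x : X) (s : seq X -> set X) : Prop :=
  forall h, open (s h) /\ s h x.

Definition winning_strategyI (X : topologicalType) (x : X) (s : seq X -> set X) : Prop :=
  strategyI x s /\
  forall u : nat -> X, (forall n, s (mkseq u n) (u n)) -> u @ \oo --> x.

Definition W_space (X : topologicalType) : Prop :=
  forall x : X, exists s : seq X -> set X, winning_strategyI x s.

(* Main.v *)
Require Import Defs.
From mathcomp Require Import all_boot all_order.
From mathcomp Require Import all_classical all_reals all_analysis.
Set Implicit Arguments. Unset Strict Implicit. Unset Printing Implicit Defensive.
Local Open Scope classical_set_scope.

Section Construction.
Variables (X Y : topologicalType) (phi : Y -> set X).
Hypotheses (Yacc : accessible_space Y) (Yreg : regular_space Y) (hphi : lsc_map phi).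
Variables (g : Y -> nat) (ginj : injective g).
Variables (sigma : X -> seq X -> set X)
  (hwin : forall x, winning_strategyI x (sigma x)).

Lemma hsig x h : open (sigma x h) /\ sigma x h x.
Proof. by case: (hwin x) => /(_ h). Qed.

Record cons := Cons { cc : Y; cO : set X; cK : set Y }.

Fixpoint inl (a : cons) (C : seq cons) : Prop :=
  match C with [::] => False | b :: m => b = a \/ inl a m end.

Definition ginv (k : nat) : option Y :=
  match pselect (exists y, g y = k) with
  | left H => Some (projT1 (cid H)) | right _ => None end.

Lemma ginvK : pcancel g ginv.
Proof.
move=> y; rewrite /ginv; case: pselect => [H|[]]; last by exists y.
by case: (cid H) => z /= /ginj ->.
Qed.

Lemma ginv_some k y : ginv k = Some y -> g y = k.
Proof.
rewrite /ginv; case: pselect => [H|//]; case: (cid H) => z /= gz [<-] //.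
Qed.

Definition req (n : nat) : option (Y * seq Y) :=
  match (unpickle (logn 2 n) : option (nat * seq nat)) with
  | Some (a, bs) => match ginv a with Some c => Some (c, pmap ginv bs) | None => None end
  | None => None end.

Lemma req_surj c l B : exists n, (B <= n)%N /\ req n = Some (c, l).
Proof.
set r := pickle ((g c, map g l) : nat * seq nat).
exists (2 ^ r * B.*2.+1); split.
  have h1 : (B <= B.*2.+1)%N by rewrite -addnn ltnW // ltnS leq_addr.
  by apply: leq_trans h1 _; apply: leq_pmull; rewrite expn_gt0.
rewrite /req.
have -> : logn 2 (2 ^ r * B.*2.+1) = r.
  rewrite lognM ?expn_gt0 // pfactorK // logn_coprime ?addn0 //.
  by rewrite coprime_sym coprimen2 /= odd_double.
by rewrite /r pickleK ginvK (map_pK ginvK).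
Qed.

Lemma open_listI (C : seq cons) (P : cons -> Prop) :
  (forall t, inl t C -> open (cO t)) ->
  open [set x | forall t, inl t C -> P t -> cO t x].
Proof.
elim: C => [|t C IH] HC.
  have -> : [set x | forall t, inl t [::] -> P t -> cO t x] = setT by apply/seteqP; split => // x _ t [].
  exact: openT.
have -> : [set x | forall t0, inl t0 (t :: C) -> P t0 -> cO t0 x] =
   (if pselect (P t) then cO t else setT) `&` [set x | forall t, inl t C -> P t -> cO t x].
  apply/seteqP; split => x /=.
    move=> H; split; last by move=> t0 ? ?; apply: H => //; right.
    by case: pselect => // Pt; apply: H => //; left.
  case=> H1 H2 t0 [Et|Ht0] Pt0; last exact: H2.
  by subst t0; move: H1; case: pselect.
apply: openI; last by apply: IH => t0 Ht0; apply: HC; right.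
by case: (pselect (P t)) => _ /=; [apply: HC; left | exact: openT].
Qed.

Lemma open_avoid (C : seq cons) (c : Y) :
  (forall t, inl t C -> closed (cK t)) ->
  open [set y | forall t, inl t C -> ~ cK t c -> ~ cK t y].
Proof.
elim: C => [|t C IH] HC.
  have -> : [set y | forall t, inl t [::] -> ~ cK t c -> ~ cK t y] = setT by apply/seteqP; split => // x _ t [].
  exact: openT.
have -> : [set y | forall t0, inl t0 (t :: C) -> ~ cK t0 c -> ~ cK t0 y] =
   (if pselect (cK t c) then setT else ~` cK t) `&` [set y | forall t, inl t C -> ~ cK t c -> ~ cK t y].
  apply/seteqP; split => x /=.
    move=> H; split; last by move=> t0 ? ?; apply: H => //; right.
    by case: pselect => // Pt; apply: H => //; left.
  case=> H1 H2 t0 [Et|Ht0] Pt0; last exact: H2.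
  by subst t0; move: H1; case: pselect.
apply: openI; last by apply: IH => t0 Ht0; apply: HC; right.
by case: (pselect (cK t c)) => _ /=; [exact: openT | rewrite openC; apply: HC; left].
Qed.

Lemma closed_processed n c : closed [set y | (g y < n)%N /\ y <> c].
Proof.
elim: n => [|n IH].
  have -> : [set y | (g y < 0)%N /\ y <> c] = set0 by apply/seteqP; split => y //= [].
  exact: closed0.
have -> : [set y | (g y < n.+1)%N /\ y <> c] =
   [set y | (g y < n)%N /\ y <> c] `|` [set y | g y = n /\ y <> c].
  apply/seteqP; split => y /=.
    by rewrite ltnS leq_eqVlt => -[/orP[/eqP ->|->] ?]; [right|left].
  by case=> -[h ?]; split => //; [exact: ltnW | rewrite h].
apply: closedU => //.
case: (pselect (exists y, g y = n /\ y <> c)) => [[y0 [gy0 y0c]]|nex].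
  have -> : [set y | g y = n /\ y <> c] = [set y0].
    apply/seteqP; split => y /=; last by move=> ->.
    by case=> gy _; apply: ginj; rewrite gy gy0.
  exact: accessible_closed_set1.
have -> : [set y | g y = n /\ y <> c] = set0.
  by apply/seteqP; split => y //= H; apply: nex; exists y.
exact: closed0.
Qed.


Definition state := ((Y -> X) * seq cons)%type.

Definition Inv (n : nat) (st : state) : Prop :=
  [/\ forall y, (g y < n)%N -> phi y (st.1 y),
      forall t, inl t st.2 -> [/\ (g (cc t) < n)%N, open (cO t), nbhs (cc t) (cK t),
          closed (cK t) & forall y, cK t y -> (g y < n)%N -> cO t (st.1 y)] &
      forall y, (n <= g y)%N -> exists x, phi y x /\ forall t, inl t st.2 -> cK t y -> cO t x].

Definition Rel n (st st' : state) : Prop :=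
  [/\ forall y, (g y < n)%N -> st'.1 y = st.1 y,
      forall t, inl t st.2 -> inl t st'.2 &
      forall c l, req n = Some (c, l) -> (g c < n.+1)%N -> all (fun z => g z < n.+1)%N l ->
        exists t, [/\ inl t st'.2, cc t = c & cO t = sigma (st'.1 c) (map st'.1 l)]].

Lemma step n st : Inv n st -> exists st', Inv n.+1 st' /\ Rel n st st'.
Proof.
case: st => F C [IA IB IC] /=.
have [F1 [HA HB HC HR]] : exists F1 : Y -> X,
  [/\ forall y, (g y < n.+1)%N -> phi y (F1 y),
      forall t, inl t C -> forall y, cK t y -> (g y < n.+1)%N -> cO t (F1 y),
      forall y, (n.+1 <= g y)%N -> exists x, phi y x /\ forall t, inl t C -> cK t y -> cO t x &
      forall y, (g y < n)%N -> F1 y = F y].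
  case: (pselect (exists y, g y = n)) => [[y0 gy0]|nex].
    have [x [px hx]] := IC y0 (eq_leq (esym gy0)).
    exists (fun z => if g z == n then x else F z); split.
    - move=> y; rewrite ltnS leq_eqVlt; case: eqP => [gyn _|_ /= ?]; last exact: IA.
      by have -> : y = y0 by apply: ginj; rewrite gyn gy0.
    - move=> t Ht y Ky; rewrite ltnS leq_eqVlt; case: eqP => [gyn _|_ /= ?].
        have Ey : y = y0 by apply: ginj; rewrite gyn gy0.
        by subst y; apply: hx.
      by case: (IB t Ht) => _ _ _ _; apply.
    - by move=> y Hy; apply: IC; exact: ltnW.
    - by move=> y Hy; rewrite (ltn_eqF Hy).
  exists F; split.
  - move=> y; rewrite ltnS leq_eqVlt => /orP[/eqP gyn|]; last exact: IA.
    by case: nex; exists y.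
  - move=> t Ht y Ky; rewrite ltnS leq_eqVlt => /orP[/eqP gyn|?].
      by case: nex; exists y.
    by case: (IB t Ht) => _ _ _ _; apply.
  - by move=> y Hy; apply: IC; exact: ltnW.
  - by [].
have HB' : forall t, inl t C -> [/\ (g (cc t) < n.+1)%N, open (cO t), nbhs (cc t) (cK t),
    closed (cK t) & forall y, cK t y -> (g y < n.+1)%N -> cO t (F1 y)].
  move=> t Ht; case: (IB t Ht) => ? ? ? ? _; split => //; [exact: ltnW | exact: HB].
case: (pselect (exists c l, req n = Some (c, l) /\ (g c < n.+1)%N /\ all (fun z => g z < n.+1)%N l)) => [[c [l [Ereq [gc gl]]]] | noreq]; last first.
  exists (F1, C); split; first by split.
  by split => //= c l Er gc gl; case: noreq; exists c, l.
set O := sigma (F1 c) (map F1 l).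
have [oO OF1c] := hsig (F1 c) (map F1 l).
set G := O `&` [set x | forall t, inl t C -> cK t c -> cO t x].
have oG : open G.
  by apply: openI => //; apply: open_listI => t Ht; case: (HB' t Ht).
set W := [set y | phi y `&` G !=set0] `&`
  ([set y | forall t, inl t C -> ~ cK t c -> ~ cK t y] `&`
   ~` [set y | (g y < n.+1)%N /\ y <> c]).
have oW : open W.
  apply: openI; first exact: hphi.2.
  apply: openI; first by apply: open_avoid => t Ht; case: (HB' t Ht).
  by rewrite openC; apply: closed_processed.
have Wc : W c.
  split; last by split => //; case.
  exists (F1 c); split; first exact: HA.
  split => // t Ht Kc; case: (HB' t Ht) => _ _ _ _; apply => //.
have nW : nbhs c W by apply: open_nbhs_nbhs; split.
have [B nB clB] := Yreg nW.
set K := closure B.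
exists (F1, Cons c O K :: C); split.
  split => /=.
  - exact: HA.
  - move=> t [<-|Ht] /=; last exact: HB'.
    split => //=.
    + by apply: filterS nB; exact: subset_closure.
    + exact: closed_closure.
    + move=> y Ky gy; have [_ [_ Hp]] := clB y Ky.
      have -> : y = c by apply: contrapT => yc; apply: Hp.
      exact: OF1c.
  - move=> y Hy; case: (pselect (K y)) => Ky.
      have [[x [px Gx]] [Av _]] := clB y Ky.
      exists x; split => // t [<-|Ht] /= Kty; first exact: Gx.1.
      have Kc : cK t c by apply: contrapT => nKc; exact: (Av t Ht nKc Kty).
      exact: Gx.2.
    have [x [px hx]] := HC y Hy; exists x; split => // t [<-|Ht] Kty //.
    exact: hx.
split => /=.
- exact: HR.
- by move=> t Ht; right.
- move=> c' l' Er' _ _; rewrite Ereq in Er'; case: Er' => <- <-.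
  by exists (Cons c O K); split => //; left.
Qed.


Definition init : state := (fun y => projT1 (cid (hphi.1 y)), [::]).

Lemma Inv0 : Inv 0 init.
Proof.
split => //= y _; exists (projT1 (cid (hphi.1 y))); split => //.
exact: (projT2 (cid (hphi.1 y))).
Qed.

Definition nxt n (p : {st | Inv n st}) : {st' | Inv n.+1 st' /\ Rel n (sval p) st'} :=
  cid (step (svalP p)).

Fixpoint seqS n : {st | Inv n st} :=
  match n with
  | 0 => exist _ init Inv0
  | n'.+1 => let q := nxt (seqS n') in exist _ (sval q) (proj1 (svalP q))
  end.

Definition S n := sval (seqS n).

Lemma S_inv n : Inv n (S n).
Proof. exact: (svalP (seqS n)). Qed.

Lemma S_rel n : Rel n (S n) (S n.+1).
Proof. exact: (proj2 (svalP (nxt (seqS n)))). Qed.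

Definition f y := (S (g y).+1).1 y.

Lemma S_stable m k y : (g y < m)%N -> (S (m + k)).1 y = (S m).1 y.
Proof.
move=> gy; elim: k => [|k IH]; first by rewrite addn0.
rewrite addnS; case: (S_rel (m + k)) => R1 _ _.
by rewrite R1 ?IH // (leq_trans gy) ?leq_addr.
Qed.

Lemma S_f m y : (g y < m)%N -> (S m).1 y = f y.
Proof.
move=> gy; rewrite /f -(subnKC gy) S_stable //.
Qed.

Lemma S_persist m k t : inl t (S m).2 -> inl t (S (m + k)).2.
Proof.
move=> Ht; elim: k => [|k IH]; first by rewrite addn0.
by rewrite addnS; case: (S_rel (m + k)) => _ R2 _; apply: R2.
Qed.

Lemma f_sel y : phi y (f y).
Proof. by case: (S_inv (g y).+1) => HA _ _; apply: HA. Qed.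

Lemma all_le_sumn (l : seq nat) : all (fun k => k <= sumn l)%N l.
Proof.
elim: l => //= a l IH; rewrite leq_addr /=.
by apply/allP => k /(allP IH) /leq_trans; apply; rewrite leq_addl.
Qed.

Lemma key c l : nbhs c (f @^-1` sigma (f c) (map f l)).
Proof.
have [n [Bn Er]] := req_surj c l (g c + sumn (map g l)).
have gc : (g c < n.+1)%N by rewrite ltnS (leq_trans _ Bn) ?leq_addr.
have gl : all (fun z => g z < n.+1)%N l.
  apply/allP => z zl; rewrite ltnS (leq_trans _ Bn) //.
  apply: (leq_trans _ (leq_addl _ _)).
  by have /allP := all_le_sumn (map g l); apply; apply: map_f.
case: (S_rel n) => _ _ /(_ c l Er gc gl) [t [Ht Ec EO]].
have EO' : cO t = sigma (f c) (map f l).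
  rewrite EO S_f //; congr (sigma _ _); apply/eq_in_map => z zl.
  by apply: S_f; apply: (allP gl).
case: (S_inv n.+1) => _ /(_ t Ht) [_ _ nK _ _] _.
have nKc : nbhs c (cK t) by rewrite -Ec.
apply: filterS nKc => y Ky; rewrite /= -EO'.
set m := maxn n.+1 (g y).+1.
have Htm : inl t (S m).2.
  by rewrite /m -(subnKC (leq_maxl n.+1 (g y).+1)); apply: S_persist.
case: (S_inv m) => _ /(_ t Htm) [_ _ _ _ HK] _.
have gym : (g y < m)%N by rewrite /m leq_maxr.
by rewrite -(S_f gym); apply: HK.
Qed.

Lemma f_cont : continuous f.
Proof.
move=> c U /= nU.
apply: contrapT => nN.
have H : forall l : seq Y, exists y, sigma (f c) (map f l) (f y) /\ ~ U (f y).
  move=> l; apply: contrapT => hn; apply: nN; apply: filterS (key c l) => y sy.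
  by apply: contrapT => nU'; apply: hn; exists y.
pose pick l := projT1 (cid (H l)).
have pickP l : sigma (f c) (map f l) (f (pick l)) /\ ~ U (f (pick l)).
  exact: (projT2 (cid (H l))).
pose lseq n := iter n (fun l => rcons l (pick l)) [::].
pose u n := f (pick (lseq n)).
have Ll n : lseq n = mkseq (fun i => pick (lseq i)) n.
  elim: n => [//|n IH]; by rewrite mkseqS -IH.
have play n : sigma (f c) (mkseq u n) (u n).
  have -> : mkseq u n = map f (lseq n) by rewrite Ll /mkseq -map_comp.
  exact: (pickP _).1.
have : \forall n \near \oo, U (u n) by exact: (hwin (f c)).2 u play U nU.
move=> /filter_ex [n Un].
exact: (pickP (lseq n)).2 Un.
Qed.

End Construction.

Theorem mainTheorem1 (X : topologicalType) :
  @accessible_space X -> W_space X -> strongly_C_selective X.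
Proof.
move=> _ HW Y Yacc Yreg Ycnt phi hphi.
have [g ginj] := countable_injP _ Ycnt.
have ginj' : injective g by move=> a b; apply: ginj; rewrite inE.
pose sigma x := projT1 (cid (HW x)).
have hwin x : winning_strategyI x (sigma x) by exact: (projT2 (cid (HW x))).
exists (f Yacc Yreg hphi ginj' hwin); split.
  exact: f_cont.
exact: f_sel.
Qed.
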